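(* Let $T$ be a monoidal monad on $\mathbf{Set}$, let $\Sigma$ be a signature and $\cdot\in\Sigma$ a binary operation symbol. Let $t[-]$ be a $\Sigma$-term with a single hole containing no constants (nullary operation symbols), in which no variable occurs more than once and the variable $x$ does not occur. If $T$ preserves the equation $t[x]=t[x\cdot x]$, then $T$ is relevant.
   Context: $t[N]$ denotes the term obtained by placing the term $N$ in the hole of $t$. A monoidal monad on $\mathbf{Set}$ is a monad with natural $\psi_{X,Y}\colon TX\times TY\to T(X\times Y)$ making it lax monoidal with $\psi^0=\eta_1$ and with $\eta,\mu$ monoidal (equivalently a commutative monad); $\psi^n$ is its $n$-ary version. The lifting $\widehat T\mathcal A$ of a $\Sigma$-algebra $\mathcal A$ on $A$ has carrier $TA$ and operations $T\sigma_{\mathcal A}\circ\psi^{\mathrm{ar}(\sigma)}$; $T$ preserves an equation if $\widehat T\mathcal A$ satisfies it whenever $\mathcal A$ does. $T$ is relevant if $\psi_{A,B}\circ\langle T\pi_1,T\pi_2\rangle=\mathrm{id}_{T(A\times B)}$ for all sets $A,B$. *)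

(* Defs.v *)
From mathcomp Require Import all_boot.

Set Implicit Arguments.
Unset Strict Implicit.
Unset Printing Implicit Defensive.

Record MonoidalMonad := {
  T : Type -> Type;
  fmap : forall A B : Type, (A -> B) -> T A -> T B;
  ret : forall A : Type, A -> T A;
  join : forall A : Type, T (T A) -> T A;
  psi : forall A B : Type, T A -> T B -> T (A * B);
  fmap_id : forall A (m : T A), fmap (fun a => a) m = m;
  fmap_comp : forall A B C (f : A -> B) (g : B -> C) (m : T A),
      fmap (fun a => g (f a)) m = fmap g (fmap f m);
  ret_nat : forall A B (f : A -> B) (a : A), fmap f (ret a) = ret (f a);
  join_nat : forall A B (f : A -> B) (mm : T (T A)),
      fmap f (join mm) = join (fmap (fmap f) mm);
  join_ret : forall A (m : T A), join (ret m) = m;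
  join_fmap_ret : forall A (m : T A), join (fmap (@ret A) m) = m;
  join_join : forall A (mmm : T (T (T A))),
      join (join mmm) = join (fmap (@join A) mmm);
  psi_nat : forall A B C D (f : A -> C) (g : B -> D) (a : T A) (b : T B),
      psi (fmap f a) (fmap g b) = fmap (fun p => (f p.1, g p.2)) (psi a b);
  (* lax monoidal: associativity and unit laws, with psi^0 = eta_1 *)
  psi_assoc : forall A B C (a : T A) (b : T B) (c : T C),
      fmap (fun p => (p.1.1, (p.1.2, p.2))) (psi (psi a b) c) = psi a (psi b c);
  psi_unitl : forall B (b : T B), fmap (fun p => p.2) (psi (ret tt) b) = b;
  psi_unitr : forall A (a : T A), fmap (fun p => p.1) (psi a (ret tt)) = a;
  (* symmetric monoidal (holds for commutative monads) *)
  psi_sym : forall A B (a : T A) (b : T B),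
      fmap (fun p => (p.2, p.1)) (psi a b) = psi b a;
  psi_ret : forall A B (a : A) (b : B), psi (ret a) (ret b) = ret (a, b);
  psi_join : forall A B (a : T (T A)) (b : T (T B)),
      psi (join a) (join b) = join (fmap (fun p => psi p.1 p.2) (psi a b))
}.

Arguments fmap M {A B} : rename.
Arguments ret M {A} : rename.
Arguments join M {A} : rename.
Arguments psi M {A B} : rename.

Lemma I0_False : 'I_0 -> False.
Proof. by case. Qed.

Definition ocons (A : Type) (n : nat) (x : A) (g : 'I_n -> A) : 'I_n.+1 -> A :=
  fun i => match unlift ord0 i with None => x | Some j => g j end.

Fixpoint psiN (M : MonoidalMonad) {A : Type} (n : nat) :
    ('I_n -> T M A) -> T M ('I_n -> A) :=
  match n return ('I_n -> T M A) -> T M ('I_n -> A) with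
  | 0 => fun _ => ret M (fun i : 'I_0 => False_rect A (I0_False i))
  | n'.+1 => fun f =>
      fmap M (fun p : A * ('I_n' -> A) => ocons p.1 p.2)
        (psi M (f ord0) (@psiN M A n' (fun i : 'I_n' => f (lift ord0 i))))
  end.

Definition relevant (M : MonoidalMonad) : Prop :=
  forall (A B : Type) (m : T M (A * B)),
    psi M (fmap M (fun p => p.1) m) (fmap M (fun p => p.2) m) = m.

Inductive term (S : Type) (ar : S -> nat) (V : Type) : Type :=
| Var : V -> term ar V
| Op : forall s : S, ('I_(ar s) -> term ar V) -> term ar V.

Arguments Var {S ar V} v.
Arguments Op {S ar V} s args.

Fixpoint occ (S : Type) (ar : S -> nat) (V : eqType) (v : V) (t : term ar V) : nat :=
  match t with
  | Var w => (w == v : nat)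
  | Op s a => \sum_(i < ar s) occ v (a i)
  end.

Fixpoint no_const (S : Type) (ar : S -> nat) (V : Type) (t : term ar V) : Prop :=
  match t with
  | Var _ => True
  | Op s a => 0 < ar s /\ forall i, no_const (a i)
  end.

Fixpoint subst (S : Type) (ar : S -> nat) (V W : Type) (f : V -> term ar W)
    (t : term ar V) : term ar W :=
  match t with
  | Var v => f v
  | Op s a => Op s (fun i => subst f (a i))
  end.

(* A term with holes: a term over [option V], the hole being [None].
   [fill t N] is t[N]. *)
Definition fill (S : Type) (ar : S -> nat) (V : Type) (t : term ar (option V))
    (N : term ar V) : term ar V :=
  subst (fun o => match o with None => N | Some v => Var v end) t.

Definition algebra (S : Type) (ar : S -> nat) (A : Type) :=
  forall s : S, ('I_(ar s) -> A) -> A.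

Fixpoint eval (S : Type) (ar : S -> nat) (V A : Type) (alg : algebra ar A)
    (rho : V -> A) (t : term ar V) : A :=
  match t with
  | Var v => rho v
  | Op s a => alg s (fun i => eval alg rho (a i))
  end.

Definition satisfies (S : Type) (ar : S -> nat) (V A : Type) (alg : algebra ar A)
    (l r : term ar V) : Prop :=
  forall rho : V -> A, eval alg rho l = eval alg rho r.

Definition lift_alg (M : MonoidalMonad) (S : Type) (ar : S -> nat) (A : Type)
    (alg : algebra ar A) : algebra ar (T M A) :=
  fun s args => fmap M (alg s) (@psiN M A (ar s) args).

Definition preserves (M : MonoidalMonad) (S : Type) (ar : S -> nat) (V : Type)
    (l r : term ar V) : Prop :=
  forall (A : Type) (alg : algebra ar A),
    satisfies alg l r -> satisfies (@lift_alg M S ar A alg) l r.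

(* Main.v *)
Require Import Defs.
From mathcomp Require Import all_boot.
From Stdlib Require Import FunctionalExtensionality.
Set Implicit Arguments.

Lemma psi_retr (M : MonoidalMonad) (A B : Type) (a : T M A) (b : B) :
  psi M a (ret M b) = fmap M (fun y => (y, b)) a.
Proof.
have -> : ret M b = fmap M (fun _ : unit => b) (ret M tt) by rewrite ret_nat.
have E := psi_nat (fun y => y) (fun _ : unit => b) a (ret M tt).
rewrite fmap_id in E; rewrite E.
by rewrite (fmap_comp (fun p : A * unit => p.1) (fun y => (y, b))) psi_unitr.
Qed.

Lemma psi_retl (M : MonoidalMonad) (A B : Type) (a : A) (b : T M B) :
  psi M (ret M a) b = fmap M (fun y => (a, y)) b.
Proof.
have -> : ret M a = fmap M (fun _ : unit => a) (ret M tt) by rewrite ret_nat.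
have E := psi_nat (fun _ : unit => a) (fun y => y) (ret M tt) b.
rewrite fmap_id in E; rewrite E.
by rewrite (fmap_comp (fun p : unit * B => p.2) (fun y => (a, y))) psi_unitl.
Qed.

Lemma psiN_ret (M : MonoidalMonad) (A : Type) n (g : 'I_n -> A) :
  @psiN M A _ (fun i => ret M (g i)) = ret M g.
Proof.
elim: n g => [|n IH] g /=.
  by congr (ret M _); apply: functional_extensionality => i; case: i.
rewrite (IH (fun i => g (lift ord0 i))) psi_ret ret_nat.
congr (ret M _); apply: functional_extensionality => i; rewrite /ocons /=.
by case: unliftP => [j ->|->].
Qed.

Lemma psiN_single (M : MonoidalMonad) (A : Type) n (i : 'I_n) (u : T M A) (g : 'I_n -> A) :
  @psiN M A _ (fun j => if j == i then u else ret M (g j))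
  = fmap M (fun y j => if j == i then y else g j) u.
Proof.
elim: n i g => [|n IH] i g; first by case: i.
rewrite /=; case: (unliftP ord0 i) => [i' ->|->].
  rewrite (negbTE (neq_lift ord0 i')) (IH i' (fun j => g (lift ord0 j))) psi_retl.
  rewrite -!fmap_comp; congr (fmap M _ u); apply: functional_extensionality => y.
  apply: functional_extensionality => j; rewrite /ocons /=.
  case: (unliftP ord0 j) => [j' ->|->]; last by rewrite (negbTE (neq_lift ord0 i')).
  by rewrite (inj_eq (@lift_inj _ ord0)).
rewrite eqxx.
have -> : (fun i0 : 'I_n => if lift ord0 i0 == ord0 then u else ret M (g (lift ord0 i0)))
    = (fun i0 => ret M (g (lift ord0 i0))).
  by apply: functional_extensionality => j; rewrite eq_sym (negbTE (neq_lift ord0 j)).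
rewrite psiN_ret psi_retr -!fmap_comp; congr (fmap M _ u); apply: functional_extensionality => y.
apply: functional_extensionality => j; rewrite /ocons /=.
case: (unliftP ord0 j) => [j' ->|->]; last by rewrite eqxx.
by rewrite eq_sym (negbTE (neq_lift ord0 j')).
Qed.

Definition rb (A B : Type) (o1 o2 : option (A * B)) : option (A * B) :=
  match o1, o2 with
  | None, _ => o2
  | _, None => o1
  | Some p, Some q => Some (p.1, q.2)
  end.

Definition comb (A B : Type) (n : nat) (a : 'I_n -> option (A * B)) : option (A * B) :=
  foldr (@rb A B) None [seq a i | i <- enum 'I_n].

Lemma rb_idem A B (y : option (A * B)) : rb y y = y.
Proof. by case: y => [[]|]. Qed.

Lemma foldr_single A B n (i : 'I_n) (y : option (A * B)) (s : seq 'I_n) :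
  foldr (@rb A B) None [seq (if j == i then y else None) | j <- s]
  = if i \in s then y else None.
Proof.
elim: s => [|j s IH] //=; rewrite in_cons {}IH eq_sym.
case: (i == j) => /=; last by case: (i \in s).
by case: (i \in s); [rewrite rb_idem | case: y => [[]|]].
Qed.

Lemma comb_single A B n (i : 'I_n) (y : option (A * B)) :
  comb (fun j => if j == i then y else None) = y.
Proof. by rewrite /comb foldr_single mem_enum. Qed.

Lemma comb_const A B n (y : option (A * B)) : 0 < n ->
  comb (fun _ : 'I_n => y) = y.
Proof.
rewrite /comb; case: n => // n _.
have : enum 'I_n.+1 != [::] by rewrite -size_eq0 size_enum_ord.
elim: (enum 'I_n.+1) => [|j s IH] //= _.
case: s IH => [|k s] IH; last by change (rb y (foldr (@rb A B) None [seq y | _ <- k :: s]) = y); rewrite IH // rb_idem.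
by clear IH; case: y => [[]|].
Qed.

Lemma eval_subst (S : Type) (ar : S -> nat) (V W X : Type) (alg : algebra ar X)
  (rho : W -> X) (f : V -> term ar W) :
  forall t, eval alg rho (subst f t) = eval alg (fun v => eval alg rho (f v)) t.
Proof.
fix IH 1; case => [v|s a] //=.
congr (alg s _); apply: functional_extensionality => i; exact: IH.
Qed.
Definition LA (M : MonoidalMonad) (S : Type) (ar : S -> nat) (A B : Type) :=
  @lift_alg M S ar (option (A * B)) (fun s => @comb A B (ar s)).

Lemma hole_eval (M : MonoidalMonad) (S : Type) (ar : S -> nat) (V : eqType) (x : V)
  (A B : Type) (rho : V -> T M (option (A * B)))
  (Hrho : forall v, v != x -> rho v = ret M None) (N : term ar V) :
  forall t : term ar (option V), occ (Some x) t = 0 ->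
   (occ None t = 0 -> eval (LA M ar A B) rho (fill t N) = ret M None)
   /\ (occ None t = 1 -> eval (LA M ar A B) rho (fill t N)
                         = eval (LA M ar A B) rho N).
Proof.
fix IH 1; case => [[v|]|s a] /=.
- move=> Hx; split=> // _; apply: Hrho.
  by apply/negP => /eqP E; move: Hx; rewrite E eqxx.
- by move=> _; split.
move=> /eqP; rewrite sum_nat_eq0 => /forallP Hx.
have Hx' : forall i, occ (Some x) (a i) = 0 by move=> i; apply/eqP; exact: (Hx i).
split.
- move=> /eqP; rewrite sum_nat_eq0 => /forallP H0.
  rewrite {1}/LA /lift_alg.
  have -> : (fun i => eval (LA M ar A B) rho
                  (subst (fun o => match o with None => N | Some v => Var v end) (a i)))
          = (fun i => ret M ((fun _ => None) i)).
    apply: functional_extensionality => i.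
    exact: (proj1 (IH (a i) (Hx' i)) (eqP (H0 i))).
  by rewrite psiN_ret ret_nat /comb; elim: (enum _).
- move=> /eqP /sum_nat_eq1 [i [_ Hi Hj]].
  rewrite {1}/LA /lift_alg.
  have -> : (fun j => eval (LA M ar A B) rho
                  (subst (fun o => match o with None => N | Some v => Var v end) (a j)))
          = (fun j => if j == i then eval (LA M ar A B) rho N
                      else ret M ((fun _ => None) j)).
    apply: functional_extensionality => j.
    case: eqP => [->|/eqP ne].
      exact: (proj2 (IH (a i) (Hx' i)) Hi).
    exact: (proj1 (IH (a j) (Hx' j)) (Hj j ne isT)).
  rewrite psiN_single -fmap_comp.
  rewrite -[RHS]fmap_id; congr (fmap M _ _); apply: functional_extensionality => y.
  exact: comb_single.
Qed.

Lemma psi_natr (M : MonoidalMonad) (A B C : Type) (g : B -> C) (a : T M A) (b : T M B) :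
  psi M a (fmap M g b) = fmap M (fun p => (p.1, g p.2)) (psi M a b).
Proof. by rewrite -(psi_nat (fun y => y) g) fmap_id. Qed.

Lemma mul2 (M : MonoidalMonad) (A B : Type) (m : T M (A * B)) n : n = 2 ->
  fmap M (@comb A B n) (@psiN M _ n (fun _ => fmap M Some m))
  = fmap M Some (psi M (fmap M (fun p => p.1) m) (fmap M (fun p => p.2) m)).
Proof.
move=> ->; rewrite /= psi_retr psi_natr -!fmap_comp psi_nat -!fmap_comp psi_nat -fmap_comp.
congr (fmap M _ _); apply: functional_extensionality => p.
rewrite /comb /=.
rewrite !enum_ordSl enum_ord0 /= /ocons unlift_none liftK /= unlift_none.
done.
Qed.

Theorem theorem5 (M : MonoidalMonad) (S : Type) (ar : S -> nat)
    (mul : S) (Hmul : ar mul = 2)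
    (V : eqType) (t : term ar (option V)) (x : V)
    (Hhole : occ None t = 1)
    (Hlin : forall v : V, occ (Some v) t <= 1)
    (Hx : occ (Some x) t = 0)
    (Hnc : no_const t)
    (Hpres : preserves M (fill t (Var x))
                         (fill t (Op mul (fun _ : 'I_(ar mul) => Var x)))) :
  relevant M.
Proof.
move=> A B m.
pose alg : algebra ar (option (A * B)) := fun s => @comb A B (ar s).
have sat : satisfies alg (fill t (Var x)) (fill t (Op mul (fun _ : 'I_(ar mul) => Var x))).
  move=> rho; rewrite /fill !eval_subst; congr (eval alg _ t).
  apply: functional_extensionality => -[v|] //=.
  by rewrite /alg comb_const // Hmul.
pose rho0 (v : V) : T M (option (A * B)) := if v == x then fmap M Some m else ret M None.
have Hrho : forall v, v != x -> rho0 v = ret M None by move=> v /negbTE; rewrite /rho0 => ->.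
have E : eval (LA M ar A B) rho0 (fill t (Var x))
       = eval (LA M ar A B) rho0 (fill t (Op mul (fun _ : 'I_(ar mul) => Var x))).
  exact: (Hpres _ alg sat rho0).
rewrite (proj2 (@hole_eval M S ar V x A B rho0 Hrho (Var x) t Hx) Hhole) in E.
rewrite (proj2 (@hole_eval M S ar V x A B rho0 Hrho _ t Hx) Hhole) in E.
move: E; rewrite /= /LA /lift_alg /rho0 eqxx mul2 //.
move=> E.
have inj : forall k : T M (A * B),
    join M (fmap M (fun o : option (A * B) => match o with Some p => ret M p | None => m end)
                   (fmap M Some k)) = k.
  by move=> k; rewrite -fmap_comp join_fmap_ret.
by rewrite -(inj (psi M _ _)) -E inj.
Qed.
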